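(* Let $\mathcal D$ be a clone $\tau$-algebra. (1) If $\mathcal D$ is minimal, then $(\mathcal D^\downarrow)^\uparrow\cong\mathcal D$. (2) For every congruence $\phi$ of the clone $\tau$-algebra $\mathcal T_\tau$ of $\tau$-terms, $((\mathcal T_\tau/\phi)^\downarrow)^\uparrow\cong\mathcal T_\tau/\phi$. (3) For every t-algebra $\mathbf A$ of type $\tau$, $((\mathbf A^\uparrow)^\downarrow)^\uparrow\cong\mathbf A^\uparrow$.
   Context: $\mathbb N=\{1,2,\dots\}$. A thread on $A$ is $s\in A^{\mathbb N}$; $r[a_1,\dots,a_n]$ is the thread with entries $a_i$ for $i\le n$ and $r_i$ for $i>n$; $r\equiv_{\mathbb N}s$ iff they differ in finitely many places, $[s]_{\mathbb N}$ the class. A trace on $A$ is a nonempty union of $\equiv_{\mathbb N}$-classes. A t-algebra of type $\tau$ and trace $\mathsf a$ is $(A,\mathsf a,\sigma^{\mathbf A})_{\sigma\in\tau}$ with $\sigma^{\mathbf A}:\mathsf a\to A$ arbitrary. Clone $\tau$-algebras: algebras $(C,q_n,\mathsf e_i,\sigma)_{n\ge0,i\ge1,\sigma\in\tau}$ (constants $\mathsf e_i,\sigma$; $q_n$ of arity $n+1$) satisfying (C1) $q_n(\mathsf e_i,\bar x)=x_i$ ($i\le n$); (C2) $q_n(\mathsf e_j,\bar x)=\mathsf e_j$ ($j>n$); (C3) $q_n(x,\mathsf e_1,\dots,\mathsf e_n)=x$; (C4) $q_n(x,\bar y)=q_k(x,\bar y,\mathsf e_{n+1},\dots,\mathsf e_k)$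 ($k>n$); (C5) $q_n(q_n(x,\bar y),\bar z)=q_n(x,q_n(y_1,\bar z),\dots,q_n(y_n,\bar z))$. A clone $\tau$-algebra is minimal if it is generated by its constants $\mathsf e_i$ ($i\ge1$) and $\sigma$ ($\sigma\in\tau$). $\mathcal T_\tau$ denotes the initial clone $\tau$-algebra, whose elements are the $\tau$-terms (least set containing $\mathsf e_1,\mathsf e_2,\dots$ and $\sigma(t_1,\dots,t_n,\mathsf e_{n+1},\mathsf e_{n+2},\dots)$ for $\sigma\in\tau$, $n\ge0$), with $q_n(t,t_1,\dots,t_n)$ the simultaneous substitution of $t_i$ for $\mathsf e_i$ ($i\le n$) in $t$. For a clone $\tau$-algebra $\mathcal C$: $\epsilon^{\mathcal C}=(\mathsf e_1^{\mathcal C},\mathsf e_2^{\mathcal C},\dots)$, $\pmb\epsilon=[\epsilon^{\mathcal C}]_{\mathbb N}$, and for $c\in C$, $\varphi_c:\pmb\epsilon\to C$, $\varphi_c(\epsilon^{\mathcal C}[s_1,\dots,s_n])=q_n^{\mathcal C}(c,s_1,\dots,s_n)$. The t-algebra under $\mathcal C$ is $\mathcal C^\downarrow=(C,\pmb\epsilon,\varphi_{\sigma^{\mathcal C}})_{\sigma\in\tau}$. For a t-algebra $\mathbf A$ of trace $\mathsf a$, the full functional clone $\tau$-algebra has universe all maps $\mathsf a\to A$, $\mathsf e_i(s)=s_i$, $q_n(\varphi,\psi_1,\dots,\psi_n)(s)=\varphi(s[\psi_1(s),\dots,\psi_n(s)])$, $\sigma\mapsto\sigma^{\mathbf A}$;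 the term clone algebra $\mathbf A^\uparrow$ is its minimal subalgebra (the one generated by the constants). *)

(* Defs.v *)
From mathcomp Require Import all_boot.
From Stdlib Require Import ClassicalEpsilon.
From Stdlib Require List.

Set Implicit Arguments.
Unset Strict Implicit.
Unset Printing Implicit Defensive.

(* Conventions: everything is 0-based.  The constant e_(i+1) of the paper is
   [ce S i]; a thread s = (s_1, s_2, ...) is a function [s : nat -> A] with
   [s i] = s_(i+1).  A family of operations q_n (n >= 0, arity n+1) is encoded
   by one function [cq : C -> seq C -> C], q_n(x, y_1..y_n) = cq x [:: y_1;..;y_n]. *)

Section Defs.
Variable Sig : Type.

Definition eqvN (A : Type) (r s : nat -> A) : Prop :=
  exists n : nat, forall i, n <= i -> r i = s i.

Definition upd (A : Type) (r : nat -> A) (l : seq A) : nat -> A :=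
  fun i => nth (r i) l i.

Lemma eqvN_upd (A : Type) (r : nat -> A) (l : seq A) : eqvN (upd r l) r.
Proof. exists (size l) => i Hi; rewrite /upd nth_default //. Qed.

Lemma eqvN_refl (A : Type) (r : nat -> A) : eqvN r r.
Proof. by exists 0. Qed.

Lemma eqvN_trans (A : Type) (r s t : nat -> A) : eqvN r s -> eqvN s t -> eqvN r t.
Proof.
move=> [n Hn] [m Hm]; exists (maxn n m) => i Hi.
rewrite Hn ?Hm //; [exact: leq_trans (leq_maxr n m) Hi | exact: leq_trans (leq_maxl n m) Hi].
Qed.

Record t_algebra := TAlgebra {
  tcar : Type;
  trace : (nat -> tcar) -> Prop;
  trace_ne : exists s, trace s;
  trace_closed : forall r s, trace s -> eqvN r s -> trace r;
  top : Sig -> {s : nat -> tcar | trace s} -> tcar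
}.

Record clone_struct := CloneStruct {
  ccar : Type;
  cq : ccar -> seq ccar -> ccar;
  ce : nat -> ccar;
  csig : Sig -> ccar
}.

Definition is_clone_algebra (S : clone_struct) : Prop :=
  (forall i (ys : seq (ccar S)), i < size ys ->
                cq (ce S i) ys = nth (ce S i) ys i) /\
  (forall j (ys : seq (ccar S)), size ys <= j ->
                cq (ce S j) ys = ce S j) /\
  (forall (x : ccar S) n, cq x (mkseq (ce S) n) = x) /\
  (forall (x : ccar S) (ys : seq (ccar S)) k, size ys <= k ->
                cq x ys = cq x (ys ++ map (ce S) (iota (size ys) (k - size ys)))) /\
  (forall (x : ccar S) (ys zs : seq (ccar S)), size ys = size zs ->
                cq (cq x ys) zs = cq x (map (fun y => cq y zs) ys)).

Definition clone_iso (S T : clone_struct) : Prop :=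
  exists f : ccar S -> ccar T,
    bijective f /\
    (forall x ys, f (cq x ys) = cq (f x) (map f ys)) /\
    (forall i, f (ce S i) = ce T i) /\
    (forall s, f (csig S s) = csig T s).

Inductive generated (S : clone_struct) : ccar S -> Prop :=
| gen_e : forall i, generated (ce S i)
| gen_sig : forall s, generated (csig S s)
| gen_q : forall x ys, generated x -> List.Forall (@generated S) ys ->
            generated (cq x ys).

Definition minimal (S : clone_struct) : Prop := forall x : ccar S, @generated S x.

Lemma Forall_map_val (T : Type) (P : T -> Prop) (ys : seq {x | P x}) :
  List.Forall P (map (@proj1_sig _ _) ys).
Proof. elim: ys => [|y ys IH] /=; constructor => //; exact: proj2_sig y. Qed.

Definition sub_gen (S : clone_struct) : clone_struct := {|
  ccar := {x : ccar S | generated x};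
  cq := fun x ys => exist _ (cq (proj1_sig x) (map (@proj1_sig _ _) ys))
                      (gen_q (proj2_sig x) (Forall_map_val ys));
  ce := fun i => exist _ (ce S i) (gen_e S i);
  csig := fun s => exist _ (csig S s) (gen_sig S s) |}.

Definition upd_tr (A : t_algebra) (s : {s : nat -> tcar A | trace s})
    (l : seq (tcar A)) : {s : nat -> tcar A | trace s} :=
  exist _ (upd (proj1_sig s) l)
    (trace_closed (proj2_sig s) (eqvN_upd (proj1_sig s) l)).

Definition full_fun (A : t_algebra) : clone_struct := {|
  ccar := {s : nat -> tcar A | trace s} -> tcar A;
  cq := fun phi psis s => phi (upd_tr s (map (fun psi => psi s) psis));
  ce := fun i s => proj1_sig s i;
  csig := @top A |}.

Definition up (A : t_algebra) : clone_struct := sub_gen (full_fun A).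

Definition eps_trace (D : clone_struct) (s : nat -> ccar D) : Prop :=
  eqvN s (ce D).

Definition phi_op (D : clone_struct) (c : ccar D)
    (s : {s : nat -> ccar D | eps_trace s}) : ccar D :=
  let n := proj1_sig (constructive_indefinite_description
             (fun n => forall i, n <= i -> proj1_sig s i = ce D i) (proj2_sig s)) in
  cq c (mkseq (proj1_sig s) n).

Lemma eps_trace_ne (D : clone_struct) : exists s, @eps_trace D s.
Proof. exists (ce D); exact: eqvN_refl. Qed.

Lemma eps_trace_closed (D : clone_struct) (r s : nat -> ccar D) :
  eps_trace s -> eqvN r s -> eps_trace r.
Proof. move=> Hs Hrs; exact: eqvN_trans Hrs Hs. Qed.

Definition down (D : clone_struct) : t_algebra := {|
  tcar := ccar D;
  trace := @eps_trace D;
  trace_ne := eps_trace_ne D;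
  trace_closed := @eps_trace_closed D;
  top := fun s => phi_op (csig D s) |}.

End Defs.

Inductive term (Sig : Type) : Type :=
| Var : nat -> term Sig                       (* Var i = e_(i+1) *)
| App : Sig -> (nat -> term Sig) -> term Sig. (* App s t = s(t 0, t 1, ...) *)

Arguments Var {Sig} _.

Inductive wf_term (Sig : Type) : term Sig -> Prop :=
| wf_Var : forall i, wf_term (Var i)
| wf_App : forall s (t : nat -> term Sig), (forall i, wf_term (t i)) ->
    (exists n, forall i, n <= i -> t i = Var i) -> wf_term (App s t).

Fixpoint subst (Sig : Type) (ys : seq (term Sig)) (t : term Sig) : term Sig :=
  match t with
  | Var i => nth (Var i) ys i
  | App s f => App s (fun i => subst ys (f i))
  end.

Lemma wf_nth (Sig : Type) (ys : seq (term Sig)) d i :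
  List.Forall (@wf_term Sig) ys -> wf_term d -> wf_term (nth d ys i).
Proof.
elim: ys i => [|y ys IH] [|i] H Hd //=; inversion H; subst; auto.
Qed.

Lemma wf_subst (Sig : Type) (ys : seq (term Sig)) (t : term Sig) :
  List.Forall (@wf_term Sig) ys -> wf_term t -> wf_term (subst ys t).
Proof.
move=> Hys; elim=> [i|s f _ IH [n Hn]] /=.
  by apply: wf_nth => //; constructor.
constructor => //; exists (maxn n (size ys)) => i Hi.
rewrite Hn; last exact: leq_trans (leq_maxl _ _) Hi.
by rewrite /= nth_default //; exact: leq_trans (leq_maxr _ _) Hi.
Qed.

Lemma wf_sig (Sig : Type) (s : Sig) : wf_term (App s Var).
Proof. constructor; [move=> i; constructor | by exists 0]. Qed.

Definition term_clone (Sig : Type) : clone_struct Sig := {|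
  ccar := {t : term Sig | wf_term t};
  cq := fun x ys => exist _ (subst (map (@proj1_sig _ _) ys) (proj1_sig x))
          (wf_subst (Forall_map_val ys) (proj2_sig x));
  ce := fun i => exist _ (Var i) (wf_Var Sig i);
  csig := fun s => exist _ (App s Var) (wf_sig s) |}.

Definition congruence (Sig : Type) (S : clone_struct Sig)
    (R : ccar S -> ccar S -> Prop) : Prop :=
  (forall x, R x x) /\ (forall x y, R x y -> R y x) /\
  (forall x y z, R x y -> R y z -> R x z) /\
  (forall x x' ys ys', R x x' -> List.Forall2 R ys ys' -> R (cq x ys) (cq x' ys')).

Section Quotient.
Variables (Sig : Type) (S : clone_struct Sig) (R : ccar S -> ccar S -> Prop).

Definition qclass := {P : ccar S -> Prop | exists x, P = R x}.
Definition cls (x : ccar S) : qclass := exist _ (R x) (ex_intro _ x erefl).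
Definition repr (c : qclass) : ccar S :=
  proj1_sig (constructive_indefinite_description _ (proj2_sig c)).

Definition quotient : clone_struct Sig := {|
  ccar := qclass;
  cq := fun c cs => cls (cq (repr c) (map repr cs));
  ce := fun i => cls (ce S i);
  csig := fun s => cls (csig S s) |}.
End Quotient.

(* Main.v *)
Require Import Defs.
From mathcomp Require Import all_boot.
From Stdlib Require List.
From Stdlib Require Import FunctionalExtensionality ProofIrrelevance PropExtensionality ClassicalEpsilon.
Set Implicit Arguments. Unset Strict Implicit.


Lemma sig_eq (A : Type) (P : A -> Prop) (x y : {a | P a}) :
  proj1_sig x = proj1_sig y -> x = y.
Proof. case: x => a pa; case: y => b pb /= E; subst b; by rewrite (proof_irrelevance _ pa pb). Qed.

Section Gen.
Variables (Sig : Type) (S : clone_struct Sig) (P : ccar S -> Prop).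
Hypotheses (He : forall i, P (ce S i)) (Hs : forall s, P (csig S s))
  (Hq : forall x ys, P x -> List.Forall P ys -> P (cq x ys)).
Fixpoint gen_ind' (x : ccar S) (H : generated x) {struct H} : P x :=
  match H with
  | gen_e i => He i
  | gen_sig s => Hs s
  | gen_q x ys Hx Hys => Hq (gen_ind' Hx)
      ((fix F (l : seq (ccar S)) (h : List.Forall (@generated _ S) l) : List.Forall P l :=
         match h with
         | List.Forall_nil => List.Forall_nil _
         | List.Forall_cons y l hy hl => List.Forall_cons _ (gen_ind' hy) (F l hl)
         end) ys Hys)
  end.
End Gen.


Lemma nth_pad (T : Type) (d : nat -> T) (l : seq T) m i :
  nth (d i) (l ++ map d (iota (size l) m)) i = nth (d i) l i.
Proof.
rewrite nth_cat; case: ltnP => // Hi.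
rewrite (nth_default (d i) Hi).
case: (ltnP (i - size l) m) => H.
  by rewrite (nth_map 0) ?size_iota // nth_iota // subnKC.
by rewrite nth_default // size_map size_iota.
Qed.

Lemma Forall_mkseq (T : Type) (P : T -> Prop) f n :
  (forall i, P (f i)) -> List.Forall P (mkseq f n).
Proof.
move=> H; apply/List.Forall_forall => x /List.in_map_iff [i [<- _]]; exact: H.
Qed.

Lemma Forall_lift (A B : Type) (f : A -> B) (l : seq B) :
  List.Forall (fun y => exists x, f x = y) l -> exists l0, map f l0 = l.
Proof.
elim=> [|y l' [x <-] _ [l0 <-]]; first by exists [::].
by exists (x :: l0).
Qed.

Definition is_hom (Sig : Type) (S T : clone_struct Sig) (f : ccar S -> ccar T) :=
  (forall x ys, f (cq x ys) = cq (f x) (map f ys)) /\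
  (forall i, f (ce S i) = ce T i) /\ (forall s, f (csig S s) = csig T s).

Lemma surj_lift (A B : Type) (f : A -> B) (l : seq B) :
  (forall y, exists x, f x = y) -> exists l0, map f l0 = l.
Proof.
move=> H; apply: Forall_lift; apply/List.Forall_forall => y _; exact: H.
Qed.

Lemma hom_clone (Sig : Type) (S T : clone_struct Sig) (f : ccar S -> ccar T) :
  is_hom f -> (forall y, exists x, f x = y) ->
  is_clone_algebra S -> is_clone_algebra T.
Proof.
move=> [Hq [He Hs]] Hsurj [C1 [C2 [C3 [C4 C5]]]].
have Hmce : forall l, map f (map (ce S) l) = map (ce T) l.
  by move=> l; rewrite -map_comp; apply: eq_map => i /=.
split; [|split; [|split; [|split]]].
- move=> i ys'; have [ys <-] := surj_lift ys' Hsurj; rewrite size_map => Hi.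
  by rewrite -He -Hq C1 // (nth_map (ce S i)).
- move=> j ys'; have [ys <-] := surj_lift ys' Hsurj; rewrite size_map => Hi.
  by rewrite -He -Hq C2.
- move=> x' n; have [x <-] := Hsurj x'.
  by rewrite /mkseq -Hmce -Hq C3.
- move=> x' ys' k; have [x <-] := Hsurj x'; have [ys <-] := surj_lift ys' Hsurj.
  rewrite size_map => Hk; by rewrite -Hq (C4 x ys k Hk) Hq map_cat Hmce.
- move=> x' ys' zs'; have [x <-] := Hsurj x'; have [ys <-] := surj_lift ys' Hsurj.
  have [zs <-] := surj_lift zs' Hsurj; rewrite !size_map => Hsz.
  rewrite -!Hq C5 // Hq -!map_comp; congr cq; apply: eq_map => y /=; by rewrite Hq.
Qed.

Lemma hom_minimal (Sig : Type) (S T : clone_struct Sig) (f : ccar S -> ccar T) :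
  is_hom f -> (forall y, exists x, f x = y) -> minimal S -> minimal T.
Proof.
move=> [Hq [He Hs]] Hsurj Hmin y; have [x <-] := Hsurj y.
elim/gen_ind': x / (Hmin x) => [i|s|x ys Hx Hys].
- rewrite He; exact: gen_e.
- rewrite Hs; exact: gen_sig.
- rewrite Hq; apply: gen_q => //; elim: Hys => [|z zs Hz _ IH] /=; by constructor.
Qed.


Lemma sub_gen_clone (Sig : Type) (S : clone_struct Sig) :
  is_clone_algebra S -> is_clone_algebra (sub_gen S).
Proof.
move=> [C1 [C2 [C3 [C4 C5]]]].
have Hmce : forall l, map (@proj1_sig _ _) (map (ce (sub_gen S)) l) = map (ce S) l.
  by move=> l; rewrite -map_comp; apply: eq_map => i /=.
split; [|split; [|split; [|split]]].
- move=> i ys Hi; apply: sig_eq => /=; rewrite C1 ?size_map //.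
  by rewrite (nth_map (ce (sub_gen S) i)).
- move=> j ys Hj; apply: sig_eq => /=; by rewrite C2 ?size_map.
- move=> x n; apply: sig_eq => /=; by rewrite /mkseq Hmce C3.
- move=> x ys k Hk; apply: sig_eq => /=; rewrite map_cat Hmce; move: (C4 (proj1_sig x) (map (@proj1_sig _ _) ys) k); rewrite size_map; by apply.
- move=> x ys zs Hsz; apply: sig_eq => /=; rewrite C5 ?size_map // -!map_comp.
  by congr cq; apply: eq_map.
Qed.

Lemma sub_gen_minimal (Sig : Type) (S : clone_struct Sig) : minimal (sub_gen S).
Proof.
pose P := fun x : ccar S => generated x /\ forall H, generated (exist (@generated _ S) x H : ccar (sub_gen S)).
suff: forall x (Hx : generated x), P x by move=> K [x Hx]; exact: (proj2 (K x Hx)).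
move=> x Hx; elim/gen_ind': x / Hx => [i|s|x ys [Hgx Hx] Hys]; split.
- exact: gen_e.
- move=> H; have -> : exist _ (ce S i) H = ce (sub_gen S) i by apply: sig_eq.
  exact: gen_e.
- exact: gen_sig.
- move=> H; have -> : exist _ (csig S s) H = csig (sub_gen S) s by apply: sig_eq.
  exact: gen_sig.
- apply: gen_q => //; elim: Hys => [|y l [Hy _] _ IH]; by constructor.
- have [ys' [Eys Fys]] : exists ys' : seq (ccar (sub_gen S)),
     map (@proj1_sig _ _) ys' = ys /\ List.Forall (@generated _ _) ys'.
    elim: Hys => [|y l [Hgy Hy] _ [l' [El Fl]]]; first by exists [::].
    exists (exist _ y Hgy :: l'); rewrite /= El; split => //; constructor => //; exact: Hy.
  move=> H; have -> : exist _ (cq x ys) H = cq (exist _ x Hgx : ccar (sub_gen S)) ys'.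
    by apply: sig_eq; rewrite /= Eys.
  apply: gen_q => //; exact: Hx.
Qed.

Lemma upd_upd (A : Type) (s : nat -> A) l1 l2 : size l1 = size l2 -> upd (upd s l1) l2 = upd s l2.
Proof.
move=> H; apply: functional_extensionality => i; rewrite /upd.
case: (ltnP i (size l2)) => Hi; first by apply: set_nth_default.
by rewrite !nth_default // H.
Qed.

Lemma full_fun_clone (Sig : Type) (A : t_algebra Sig) : is_clone_algebra (full_fun A).
Proof.
split; [|split; [|split; [|split]]].
- move=> i ys Hi; apply: functional_extensionality => s /=.
  rewrite /upd (nth_map (ce (full_fun A) i)) //.
- move=> j ys Hj; apply: functional_extensionality => s /=.
  by rewrite /upd nth_default // size_map.
- move=> x n; apply: functional_extensionality => s /=; congr x; apply: sig_eq => /=.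
  apply: functional_extensionality => i; rewrite /upd /mkseq -map_comp /=.
  case: (ltnP i n) => Hi; first by rewrite (nth_map 0) ?size_iota // nth_iota.
  by rewrite nth_default // size_map size_iota.
- move=> x ys k Hk; apply: functional_extensionality => s /=; congr x; apply: sig_eq => /=.
  apply: functional_extensionality => i; rewrite /upd map_cat -map_comp /=.
  by rewrite -(size_map (fun psi => psi s) ys) nth_pad.
- move=> x ys zs Hsz; apply: functional_extensionality => s /=; congr x; apply: sig_eq => /=.
  rewrite upd_upd ?size_map // -map_comp; congr upd.
Qed.


Lemma subst_id (Sig : Type) n (t : term Sig) : subst (mkseq Var n) t = t.
Proof.
elim: t => [i|s f IH] /=.
  case: (ltnP i n) => Hi; first by rewrite nth_mkseq.
  by rewrite nth_default // size_mkseq.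
by congr App; apply: functional_extensionality => i.
Qed.

Lemma subst_pad (Sig : Type) (l : seq (term Sig)) m t :
  subst (l ++ map Var (iota (size l) m)) t = subst l t.
Proof.
elim: t => [i|s f IH] /=; first by rewrite nth_pad.
by congr App; apply: functional_extensionality => i.
Qed.

Lemma subst_comp (Sig : Type) (l1 l2 : seq (term Sig)) t :
  size l1 = size l2 -> subst l2 (subst l1 t) = subst (map (subst l2) l1) t.
Proof.
move=> H; elim: t => [i|s f IH] /=.
  case: (ltnP i (size l1)) => Hi; first by rewrite (nth_map (Var i)).
  have Hi2 : size l2 <= i by rewrite -H.
  by rewrite !nth_default ?size_map // /= nth_default.
by congr App; apply: functional_extensionality => i.
Qed.

Lemma term_clone_clone (Sig : Type) : is_clone_algebra (term_clone Sig).
Proof.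
have Hmce : forall l, map (@proj1_sig _ _) (map (ce (term_clone Sig)) l) = map Var l.
  by move=> l; rewrite -map_comp; apply: eq_map => i /=.
split; [|split; [|split; [|split]]].
- move=> i ys Hi; apply: sig_eq => /=.
  by rewrite (nth_map (ce (term_clone Sig) i)).
- move=> j ys Hj; apply: sig_eq => /=; by rewrite nth_default ?size_map.
- move=> x n; apply: sig_eq => /=; by rewrite /mkseq Hmce subst_id.
- move=> x ys k Hk; apply: sig_eq => /=; rewrite map_cat Hmce.
  by rewrite -(size_map (@proj1_sig _ _) ys) subst_pad.
- move=> x ys zs Hsz; apply: sig_eq => /=; rewrite subst_comp ?size_map // -!map_comp.
  by congr subst; apply: eq_map.
Qed.

Lemma term_clone_minimal (Sig : Type) : minimal (term_clone Sig).
Proof.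
suff K : forall t (w0 : wf_term t) (w : wf_term t), generated (exist _ t w : ccar (term_clone Sig)).
  by move=> [t w]; exact: K.
move=> t w0; elim: t / w0 => [i|s f wf IH [n Hn]] w.
- have -> : exist _ (Var i) w = ce (term_clone Sig) i by apply: sig_eq.
  exact: gen_e.
- pose ys := mkseq (fun i => exist _ (f i) (wf i) : ccar (term_clone Sig)) n.
  have -> : exist _ (App s f) w = cq (csig (term_clone Sig) s) ys.
    apply: sig_eq => /=; congr App; apply: functional_extensionality => i.
    rewrite /ys /mkseq -map_comp /=.
    case: (ltnP i n) => Hi; first by rewrite (nth_map 0) ?size_iota // nth_iota.
    by rewrite nth_default ?size_map ?size_iota // Hn.
  apply: gen_q; first exact: gen_sig.
  apply: Forall_mkseq => i; exact: IH.
Qed.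


Section Q.
Variables (Sig : Type) (S : clone_struct Sig) (R : ccar S -> ccar S -> Prop).
Hypothesis HR : congruence R.

Lemma cls_eq a b : R a b -> cls R a = cls R b.
Proof.
move: HR => [Hr [Hs [Ht _]]] Hab; apply: sig_eq => /=.
apply: functional_extensionality => z; apply: propositional_extensionality; split.
  move=> H; apply: Ht H; exact: Hs.
move=> H; exact: Ht Hab H.
Qed.

Lemma repr_cls a : R a (Defs.repr (cls R a)).
Proof.
move: HR => [Hr [Hs [Ht _]]].
rewrite /Defs.repr; case: (ClassicalEpsilon.constructive_indefinite_description _ _) => y /= E.
have : R y y by [].
by rewrite -E.
Qed.

Lemma cls_repr c : cls R (Defs.repr c) = c.
Proof.
apply: sig_eq => /=; rewrite /Defs.repr.
by case: (ClassicalEpsilon.constructive_indefinite_description _ _) => y /= E.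
Qed.

Lemma cls_hom : is_hom (S := S) (T := quotient R) (cls R).
Proof.
move: HR => [Hr [Hs [Ht Hc]]].
split; [|split] => //.
move=> x ys /=; apply: cls_eq; apply: Hc; first exact: repr_cls.
rewrite -map_comp; elim: ys => [|y l IH] /=; constructor => //; exact: repr_cls.
Qed.

Lemma cls_surj : forall y : ccar (quotient R), exists x, cls R x = y.
Proof. move=> y; exists (Defs.repr y); exact: cls_repr. Qed.
End Q.


Section Main1.
Variables (Sig : Type) (D : clone_struct Sig).
Hypothesis HD : is_clone_algebra D.

Definition TT := {s : nat -> ccar D | eps_trace s}.
Definition epsT : TT := exist (@eps_trace _ D) (ce D) (eqvN_refl (ce D)).

Lemma pad_mkseq (c : ccar D) (s : nat -> ccar D) n k :
  (forall i, n <= i -> s i = ce D i) -> n <= k ->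
  cq c (mkseq s k) = cq c (mkseq s n).
Proof.
move: HD => [C1 [C2 [C3 [C4 C5]]]] Hs Hnk.
rewrite (C4 c (mkseq s n) k) ?size_mkseq //.
rewrite /mkseq -(subnKC Hnk) iotaD map_cat add0n subnKC //; congr (cq c (_ ++ _)).
apply/eq_in_map => i; rewrite mem_iota => /andP [Hi _]; exact: Hs.
Qed.

Lemma K0 (c : ccar D) (s : TT) m :
  (forall i, m <= i -> proj1_sig s i = ce D i) ->
  phi_op c s = cq c (mkseq (proj1_sig s) m).
Proof.
move=> Hm; rewrite /phi_op.
case: (constructive_indefinite_description _ _) => n Hn /=.
rewrite -(@pad_mkseq c _ n (maxn n m)) ?leq_maxl //.
by rewrite (@pad_mkseq c _ m (maxn n m)) ?leq_maxr.
Qed.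

Lemma K2 c : phi_op c epsT = c.
Proof.
move: HD => [C1 [C2 [C3 [C4 C5]]]].
by rewrite (@K0 c epsT 0) // C3.
Qed.

Definition upd_trD (s : TT) (l : seq (ccar D)) : TT := upd_tr (A := down D) s l.

Lemma K3 c ds : phi_op c (upd_trD epsT ds) = cq c ds.
Proof.
rewrite (@K0 c _ (size ds)) /=; last by move=> i Hi; rewrite /upd nth_default.
congr cq; apply: (@eq_from_nth _ (ce D 0)); rewrite size_mkseq //.
move=> i Hi; by rewrite nth_mkseq // /upd (set_nth_default (ce D 0)).
Qed.

Lemma K1 (psi : ccar (full_fun (down D))) : generated psi ->
  forall s, psi s = phi_op (psi epsT) s.
Proof.
move: (HD) => [C1 [C2 [C3 [C4 C5]]]].
move=> Hpsi; elim/gen_ind': psi / Hpsi => [i|sg|x ys IHx IHys] s.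
- rewrite /=; case: (proj2_sig s) => m0 Hm0.
  rewrite (@K0 _ s (maxn m0 i.+1)); last first.
    move=> j Hj; apply: Hm0; exact: leq_trans (leq_maxl _ _) Hj.
  rewrite C1 ?size_mkseq; last by rewrite leq_max ltnSn orbT.
  by rewrite nth_mkseq // leq_max ltnSn orbT.
- by rewrite /= K2.
- rewrite /=.
  set ds := map (fun y => y epsT) ys.
  rewrite IHx.
  have -> : x (upd_tr (A := down D) epsT ds) = cq (x epsT) ds.
    by rewrite IHx -/(upd_trD _ _) K3.
  set c := x epsT.
  have Evs : map (fun psi => psi s) ys = map (fun d => phi_op d s) ds.
    rewrite /ds -map_comp; elim: IHys => [|y l Hy _ IH] //=; by rewrite Hy IH.
  rewrite Evs; case: (proj2_sig s) => m0 Hm0.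
  set k := maxn m0 (size ds).
  have Hk : forall i, k <= i -> proj1_sig s i = ce D i.
    move=> j Hj; apply: Hm0; exact: leq_trans (leq_maxl _ _) Hj.
  rewrite (@K0 _ _ k); last first.
    move=> i Hi; rewrite /= /upd nth_default ?size_map; first exact: Hk.
    rewrite -(size_map (fun y => y epsT) ys); exact: leq_trans (leq_maxr _ _) Hi.
  rewrite (@K0 _ s k) //.
  have Hsk : size ds <= k by exact: leq_maxr.
  rewrite (C4 c ds k Hsk) C5; last by rewrite size_cat size_map size_iota size_mkseq subnKC.
  congr cq; apply: (@eq_from_nth _ (ce D 0)).
    by rewrite size_map size_cat size_map size_iota size_mkseq subnKC.
  rewrite size_mkseq => i Hi.
  rewrite nth_mkseq // (nth_map (ce D 0)); last by rewrite size_cat size_map size_iota subnKC.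
  rewrite /= /upd nth_cat; case: ltnP => Hids.
    rewrite (nth_map (ce D 0)) ?size_map; [exact: K0 _ Hk | by move: Hids; rewrite size_map].
  have Hik : i - size ds < k - size ds.
    by rewrite ltn_sub2r // (leq_ltn_trans Hids Hi).
  rewrite (nth_map 0 (ce D 0)) ?size_iota // nth_iota // subnKC //.
  rewrite C1 ?size_mkseq // nth_mkseq // nth_default // size_map //.
Qed.
End Main1.


Lemma part1 (Sig : Type) (D : clone_struct Sig) :
  is_clone_algebra D -> minimal D -> clone_iso (up (down D)) D.
Proof.
move=> HD Hmin.
pose g := fun psi : ccar (up (down D)) => proj1_sig psi (epsT D).
have Hq : forall x ys, g (cq x ys) = cq (g x) (map g ys).
  move=> [x Hx] ys; rewrite /g /=.
  rewrite (K1 HD Hx) -map_comp.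
  exact: (K3 HD).
have He : forall i, g (ce (up (down D)) i) = ce D i by [].
have Hs : forall s, g (csig (up (down D)) s) = csig D s.
  move=> s; rewrite /g /=; exact: K2.
have Hinj : injective g.
  move=> [x Hx] [y Hy]; rewrite /g /= => E; apply: sig_eq => /=.
  apply: functional_extensionality => s; by rewrite (K1 HD Hx) (K1 HD Hy) E.
have Hsurj : forall d, exists psi, g psi = d.
  move=> d; elim/gen_ind': d / (Hmin d) => [i|s|x ys [px <-] Hys].
  - by exists (ce (up (down D)) i).
  - by exists (csig (up (down D)) s); exact: Hs.
  - have [l <-] := Forall_lift Hys.
    by exists (cq px l); rewrite Hq.
pose h := fun d => proj1_sig (constructive_indefinite_description _ (Hsurj d)).
have Hgh : forall d, g (h d) = d.
  move=> d; rewrite /h; by case: (constructive_indefinite_description _ _).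
exists g; split; [|split => //].
exists h => [x|d]; last exact: Hgh.
apply: Hinj; exact: Hgh.
Qed.

Theorem mainTheorem5 (Sig : Type) :
  (* (1) *)
  (forall D : clone_struct Sig,
     is_clone_algebra D -> minimal D -> clone_iso (up (down D)) D) /\
  (* (2) *)
  (forall phi : ccar (term_clone Sig) -> ccar (term_clone Sig) -> Prop,
     congruence phi ->
     clone_iso (up (down (quotient phi))) (quotient phi)) /\
  (* (3) *)
  (forall A : t_algebra Sig, clone_iso (up (down (up A))) (up A)).
Proof.
split; [|split].
- move=> D; exact: part1.
- move=> phi Hphi; apply: part1.
  + exact: hom_clone (cls_hom Hphi) (cls_surj (R := phi)) (term_clone_clone Sig).
  + apply: (hom_minimal (cls_hom Hphi)); [exact: cls_surj | exact: term_clone_minimal].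
- move=> A; apply: part1.
  + exact: sub_gen_clone (full_fun_clone A).
  + exact: sub_gen_minimal.
Qed.
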